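(* Let $G$ and $H$ be graphs with no isolated vertices. Then $$\gamma_{oir2}(G\Box H)\leq \alpha(G)\beta(H)+\beta(G)|V(H)|-\min\{\beta(G),\beta(H)\}.$$
   Context: All graphs are finite and simple. $\alpha(F)$ denotes the independence number of a graph $F$ and $\beta(F)$ its vertex cover number, so $\alpha(F)+\beta(F)=|V(F)|$. For a graph $G$, a function $f:V(G)\to\mathcal{P}(\{1,2\})$ is an outer-independent 2-rainbow dominating function (OI2RD function) if every vertex $v$ with $f(v)=\emptyset$ satisfies $\bigcup_{u\in N(v)}f(u)=\{1,2\}$ and the set $\{v: f(v)=\emptyset\}$ is independent. The weight of $f$ is $\sum_{v}|f(v)|$ and $\gamma_{oir2}(G)$ is the minimum weight of an OI2RD function of $G$. The Cartesian product $G\Box H$ has vertex set $V(G)\times V(H)$, with $(x,y)(x',y')$ an edge iff either $x=x'$ and $yy'\in E(H)$, or $y=y'$ and $xx'\in E(G)$. *)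

(* Defs.v *)
From mathcomp Require Import all_boot.
Set Implicit Arguments. Unset Strict Implicit. Unset Printing Implicit Defensive.

Definition simple_graph (T : finType) (e : rel T) : Prop :=
  symmetric e /\ irreflexive e.

Definition no_isolated (T : finType) (e : rel T) : Prop :=
  forall v : T, exists u : T, e v u.

Definition independent (T : finType) (e : rel T) (S : {set T}) : bool :=
  [forall x in S, forall y in S, ~~ e x y].

Definition vertex_cover (T : finType) (e : rel T) (S : {set T}) : bool :=
  [forall x, forall y, e x y ==> (x \in S) || (y \in S)].

Definition alpha (T : finType) (e : rel T) : nat :=
  \max_(S : {set T} | independent e S) #|S|.

(* vertex cover number: minimum size of a vertex cover (setT is one) *)
Definition beta (T : finType) (e : rel T) : nat :=
  \big[minn/#|T|]_(S : {set T} | vertex_cover e S) #|S|.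

(* labels {1,2} are represented by 'I_2 *)
Definition oi2rd (T : finType) (e : rel T) (f : {ffun T -> {set 'I_2}}) : bool :=
  [forall v, (f v == set0) ==> (\bigcup_(u | e v u) f u == setT)]
  && independent e [set v | f v == set0].

Definition weight (T : finType) (f : {ffun T -> {set 'I_2}}) : nat :=
  \sum_(v : T) #|f v|.

(* minimum weight; the constant function setT (weight 2|T|) is always an OI2RD function *)
Definition gamma_oir2 (T : finType) (e : rel T) : nat :=
  \big[minn/(2 * #|T|)]_(f : {ffun T -> {set 'I_2}} | oi2rd e f) weight f.

Definition cart_rel (T1 T2 : finType) (e1 : rel T1) (e2 : rel T2) : rel (T1 * T2) :=
  fun x y => ((x.1 == y.1) && e2 x.2 y.2) || ((x.2 == y.2) && e1 x.1 y.1).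

(* Main.v *)
Require Import Defs.
From mathcomp Require Import all_boot.
From mathcomp Require Import zify.

Set Implicit Arguments. Unset Strict Implicit. Unset Printing Implicit Defensive.

Lemma bigmin_le (I : finType) (P : pred I) (F : I -> nat) m i :
  P i -> \big[minn/m]_(j | P j) F j <= F i.
Proof.
move=> Pi; rewrite unlock.
have : i \in index_enum I by rewrite mem_index_enum.
elim: (index_enum I) => //= a r IH; rewrite inE; case/orP => [/eqP <-|ir].
  by rewrite Pi geq_minl.
have H := IH ir; case: (P a); last exact: H; exact: leq_trans (geq_minr _ _) H.
Qed.

Lemma beta_attained (T : finType) (e : rel T) :
  exists2 S : {set T}, vertex_cover e S & #|S| = beta e.
Proof.
rewrite /beta.
have : (\big[minn/#|T|]_(S : {set T} | vertex_cover e S) #|S| = #|T|) \/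
   exists2 S : {set T}, vertex_cover e S &
     #|S| = \big[minn/#|T|]_(S : {set T} | vertex_cover e S) #|S|.
  apply: (big_ind (fun x => x = #|T| \/ exists2 S : {set T}, vertex_cover e S & #|S| = x)).
  - by left.
  - move=> x y Hx Hy; rewrite /minn; case: ifP => _; [exact: Hx|exact: Hy].
  - by move=> S HS; right; exists S.
case=> [->|//]; exists setT; last by rewrite cardsT.
by apply/forallP => x; apply/forallP => y; rewrite inE implybT.
Qed.

Lemma vcP (T : finType) (e : rel T) S x y :
  vertex_cover e S -> e x y -> (x \in S) || (y \in S).
Proof. by move/forallP/(_ x)/forallP/(_ y)/implyP. Qed.

Definition lab (T1 T2 : finType) (S1 : {set T1}) (S2 : {set T2}) (D : {set T1 * T2}) :
  {ffun T1 * T2 -> {set 'I_2}} :=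
  [ffun v => if v \in D then set0 else if v.1 \in S1 then [set ord0]
             else if v.2 \in S2 then [set ord_max] else set0].

Lemma set1_ne0 (T : finType) (a : T) : ([set a] == set0) = false.
Proof. by apply/negbTE/eqP => /setP /(_ a); rewrite !inE eqxx. Qed.

Lemma lab0 (T1 T2 : finType) (S1 : {set T1}) (S2 : {set T2}) D v :
  (lab S1 S2 D v == set0) = (v \in D) || ((v.1 \notin S1) && (v.2 \notin S2)).
Proof.
rewrite /lab ffunE; case: (v \in D); rewrite ?eqxx //=.
by case: (v.1 \in S1); case: (v.2 \in S2); rewrite ?set1_ne0 ?eqxx.
Qed.

Lemma key (T1 T2 : finType) (e1 : rel T1) (e2 : rel T2)
  (i1 : irreflexive e1) (i2 : irreflexive e2)
  (nG : no_isolated e1) (nH : no_isolated e2)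
  (S1 : {set T1}) (S2 : {set T2}) (D : {set T1 * T2})
  (hS1 : vertex_cover e1 S1)
  (hS1n : forall s, s \in S1 -> exists x, e1 s x && (x \notin S1))
  (hS2 : vertex_cover e2 S2)
  (hD1 : forall v, v \in D -> (v.1 \in S1) && (v.2 \in S2))
  (hD2 : forall v w, v \in D -> w \in D -> (v.1 = w.1) \/ (v.2 = w.2) -> v = w) :
  oi2rd (cart_rel e1 e2) (lab S1 S2 D).
Proof.
rewrite /oi2rd; apply/andP; split.
- apply/forallP => v; apply/implyP; rewrite lab0 => hv.
  have [[u1 [eu1 fu1]] [u2 [eu2 fu2]]] :
    (exists u1, cart_rel e1 e2 v u1 /\ lab S1 S2 D u1 = [set ord0]) /\
    (exists u2, cart_rel e1 e2 v u2 /\ lab S1 S2 D u2 = [set ord_max]).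
    case: v hv => x y /=; case/orP => [vD | /andP [nx ny]].
    + have /andP [/= xS yS] := hD1 _ vD.
      split.
      * have [y' ey'] := nH y.
        exists (x, y'); split; first by rewrite /cart_rel /= eqxx ey'.
        rewrite /lab ffunE /=.
        have -> : ((x, y') \in D) = false.
          apply/negbTE/negP => hu; have := hD2 _ _ vD hu (or_introl erefl).
          by case=> eq; rewrite eq i2 in ey'.
        by rewrite xS.
      * have [x' /andP [ex' nx']] := hS1n x xS.
        exists (x', y); split; first by rewrite /cart_rel /= eqxx ex' orbT.
        rewrite /lab ffunE /=.
        have -> : ((x', y) \in D) = false.
          apply/negbTE/negP => hu; have /andP [/= h _] := hD1 _ hu.
          by rewrite h in nx'.
        by rewrite (negbTE nx') yS.
    + split.
      * have [x' ex'] := nG x.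
        have x'S : x' \in S1 by have := vcP hS1 ex'; rewrite (negbTE nx).
        exists (x', y); split; first by rewrite /cart_rel /= eqxx ex' orbT.
        rewrite /lab ffunE /=.
        have -> : ((x', y) \in D) = false.
          apply/negbTE/negP => hu; have /andP [_ /= h] := hD1 _ hu.
          by rewrite h in ny.
        by rewrite x'S.
      * have [y' ey'] := nH y.
        have y'S : y' \in S2 by have := vcP hS2 ey'; rewrite (negbTE ny).
        exists (x, y'); split; first by rewrite /cart_rel /= eqxx ey'.
        rewrite /lab ffunE /=.
        have -> : ((x, y') \in D) = false.
          apply/negbTE/negP => hu; have /andP [/= h _] := hD1 _ hu.
          by rewrite h in nx.
        by rewrite (negbTE nx) y'S.
  apply/eqP/setP => i; rewrite inE; apply/bigcupP.
  move: i => [[|[|m]] hm] //.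
  + by exists u1 => //; rewrite fu1 inE; apply/eqP; exact: val_inj.
  + by exists u2 => //; rewrite fu2 inE; apply/eqP; exact: val_inj.
- rewrite /independent; apply/forallP => v; apply/implyP; rewrite inE lab0 => hv.
  apply/forallP => w; apply/implyP; rewrite inE lab0 => hw.
  apply/negP; rewrite /cart_rel.
  case/orP: hv => [vD | /andP[nv1 nv2]]; case/orP: hw => [wD | /andP[nw1 nw2]];
    case/orP => /andP [/eqP h e].
  + by have eq := hD2 _ _ vD wD (or_introl h); rewrite eq i2 in e.
  + by have eq := hD2 _ _ vD wD (or_intror h); rewrite eq i1 in e.
  + by have /andP [h1 _] := hD1 _ vD; rewrite h in h1; rewrite h1 in nw1.
  + by have /andP [_ h1] := hD1 _ vD; rewrite h in h1; rewrite h1 in nw2.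
  + by have /andP [h1 _] := hD1 _ wD; rewrite -h in h1; rewrite h1 in nv1.
  + by have /andP [_ h1] := hD1 _ wD; rewrite -h in h1; rewrite h1 in nv2.
  + by have := vcP hS2 e; rewrite (negbTE nv2) (negbTE nw2).
  + by have := vcP hS1 e; rewrite (negbTE nv1) (negbTE nw1).
Qed.

Lemma sum_card (T : finType) (A : {set T}) : \sum_(v : T) (v \in A : nat) = #|A|.
Proof.
rewrite -sum1_card [RHS]big_mkcond /=; apply: eq_bigr => v _.
by case: (v \in A).
Qed.

Lemma weight_lab (T1 T2 : finType) (S1 : {set T1}) (S2 : {set T2}) (D : {set T1 * T2})
  (hD1 : forall v, v \in D -> (v.1 \in S1) && (v.2 \in S2)) :
  weight (lab S1 S2 D) + #|D| = #|S1| * #|T2| + #|~: S1| * #|S2|.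
Proof.
rewrite -cardsT -!cardsX /weight -!sum_card -!big_split /=.
apply: eq_bigr => v _; rewrite /lab ffunE !inE.
case: (boolP (v \in D)) => vD.
  by have /andP [-> _] := hD1 _ vD; rewrite cards0.
by case: (v.1 \in S1); case: (v.2 \in S2); rewrite ?cards1 ?cards0.
Qed.

Theorem theorem3 (T1 T2 : finType) (e1 : rel T1) (e2 : rel T2)
  (HG : simple_graph e1) (HH : simple_graph e2)
  (nG : no_isolated e1) (nH : no_isolated e2) :
  gamma_oir2 (cart_rel e1 e2) <=
    alpha e1 * beta e2 + beta e1 * #|T2| - minn (beta e1) (beta e2).
Proof.
case: HG => s1 i1; case: HH => s2 i2.
have [S1 vc1 cS1] := beta_attained e1.
have [S2 vc2 cS2] := beta_attained e2.
set k := minn (beta e1) (beta e2).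
have h1 : k <= #|S1| by rewrite cS1 geq_minl.
have h2 : k <= #|S2| by rewrite cS2 geq_minr.
pose g (i : 'I_k) : T1 * T2 :=
  (enum_val (widen_ord h1 i), enum_val (widen_ord h2 i)).
have ginj1 : forall i j, (g i).1 = (g j).1 -> i = j.
  move=> i j /= /enum_val_inj /(congr1 val) /= eq; exact: val_inj.
have ginj2 : forall i j, (g i).2 = (g j).2 -> i = j.
  move=> i j /= /enum_val_inj /(congr1 val) /= eq; exact: val_inj.
pose D := g @: [set: 'I_k].
have cD : #|D| = k.
  rewrite card_imset ?cardsT ?card_ord // => i j eq; apply: ginj1; by rewrite eq.
have hD1 : forall v, v \in D -> (v.1 \in S1) && (v.2 \in S2).
  by move=> v /imsetP [i _ ->] /=; rewrite !enum_valP.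
have hD2 : forall v w, v \in D -> w \in D -> (v.1 = w.1) \/ (v.2 = w.2) -> v = w.
  move=> v w /imsetP [i _ ->] /imsetP [j _ ->] [/ginj1|/ginj2] -> //.
have hS1n : forall s, s \in S1 -> exists x, e1 s x && (x \notin S1).
  move=> s sS; case: (boolP [exists x, e1 s x && (x \notin S1)]) => [/existsP //|/existsPn hn]; exfalso.
  have vc' : vertex_cover e1 (S1 :\ s).
    apply/forallP => x; apply/forallP => y; apply/implyP => exy; rewrite !inE.
    case: (eqVneq x s) => [xs|xs] /=.
      have := hn y; rewrite -xs exy /= negbK => yS.
      by rewrite yS andbT; apply/eqP => yx; rewrite yx i1 in exy.
    case: (eqVneq y s) => [ys|ys] /=; last exact: vcP vc1 exy.
    have := hn x; rewrite -ys (s1 y x) exy /= negbK => -> //.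
  have := @bigmin_le _ (vertex_cover e1) (fun S : {set T1} => #|S|) #|T1| _ vc'.
  rewrite -/(beta e1) -cS1 (cardsD1 s S1) sS; lia.
have hal : #|~: S1| <= alpha e1.
  apply: (@leq_bigmax_cond _ (independent e1) (fun S : {set T1} => #|S|)).
  apply/forallP => x; apply/implyP; rewrite inE => nx.
  apply/forallP => y; apply/implyP; rewrite inE => ny.
  by apply/negP => exy; have := vcP vc1 exy; rewrite (negbTE nx) (negbTE ny).
have orl := key i1 i2 nG nH vc1 hS1n vc2 hD1 hD2.
have := @bigmin_le _ (oi2rd (cart_rel e1 e2)) (fun f => weight f) (2 * #|{: T1 * T2}|) _ orl.
rewrite -/(gamma_oir2 _) => hg.
have hw := weight_lab hD1.
have hm : #|~: S1| * #|S2| <= alpha e1 * beta e2 by rewrite -cS2 leq_mul2r hal orbT.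
move: hg hw hm; rewrite cD cS1 cS2.
move: (weight _) (gamma_oir2 _) (#|~: S1| * beta e2) (alpha e1 * beta e2) (beta e1 * #|T2|).
move=> a b c d f; lia.
Qed.
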